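(* There is an absolute constant $C>0$ such that the following holds. Let $\varepsilon>0$, let $f:\mathbb R\to\mathbb R$ be $1$-smooth, and let $x_-<x_+$ satisfy $f'(x_-)\le-\varepsilon$ and $0\le f(x_-)-f(x_+)\le\frac{\varepsilon}{4}(x_+-x_-)$. Then BinarySearchII$(x_-,x_+)$ terminates and outputs an $\varepsilon$-stationary point of $f$ using at most $C\bigl(1+\max\{0,\log\frac{x_+-x_-}{\varepsilon}\}\bigr)$ oracle queries.
   Context: $f:\mathbb R\to\mathbb R$ is $1$-smooth if it is continuously differentiable and $f'$ is $1$-Lipschitz; $x$ is an $\varepsilon$-stationary point if $|f'(x)|<\varepsilon$. The oracle returns $(f(x),f'(x))$ on query $x$; values at already-queried points (including $x_\pm$) are reused. Subroutines (a recursive call's output is returned unchanged): BinarySearch$(x_0,x_1)$: $m=(x_0+x_1)/2$; if $|f'(m)|<\varepsilon$ return $m$; if $f'(m)\le-\varepsilon$ return BinarySearch$(m,x_1)$; if $f'(m)>0$ return BinarySearch$(x_0,m)$. BinarySearchIII$(x_-,x_+)$: $m=(x_-+x_+)/2$; if $|f'(m)|<\varepsilon$ return $m$; else if $f'(m)>0$ return BinarySearch$(x_-,m)$; else if $f(m)\ge f(x_-)$ return BinarySearchIII$(x_-,m)$; else return BinarySearchIII$(m,x_+)$. BinarySearchII$(x_-,x_+)$: $m=(x_-+x_+)/2$; if $|f'(m)|<\varepsilon$ return $m$; else if $f'(m)>0$ return BinarySearch$(x_-,m)$; else if $f(m)\ge f(x_-)$ return BinarySearchIII$(x_-,m)$;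 else if $f(m)\le f(x_+)$ return BinarySearchIII$(m,x_+)$; else if $f(x_-)-f(m)\le\frac12(f(x_-)-f(x_+))$ return BinarySearchII$(x_-,m)$; else return BinarySearchII$(m,x_+)$. *)

(* Defs.v *)
From Stdlib Require Import Reals Lra.
Open Scope R_scope.

(* f : R -> R is 1-smooth, with derivative f' (f' continuous follows from
   the 1-Lipschitz property). *)
Definition one_smooth (f f' : R -> R) : Prop :=
  (forall x, derivable_pt_lim f x (f' x)) /\
  (forall x y, Rabs (f' x - f' y) <= Rabs (x - y)).

Definition add_query (r : option (R * nat)) : option (R * nat) :=
  match r with
  | Some (m, q) => Some (m, S q)
  | None => None
  end.

Section Algorithms.
Variables (f f' : R -> R) (eps : R).

(* Fuel-bounded executions: [None] means "fuel exhausted" (or an impossible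
   branch); [Some (m, q)] means the procedure returned m after q oracle
   queries (one new query, at the midpoint, per call; endpoint values are
   reused). *)
Fixpoint BinarySearch (fuel : nat) (x0 x1 : R) : option (R * nat) :=
  match fuel with
  | O => None
  | S n =>
    let m := (x0 + x1) / 2 in
    if Rlt_dec (Rabs (f' m)) eps then Some (m, 1%nat)
    else if Rle_dec (f' m) (- eps) then add_query (BinarySearch n m x1)
    else if Rlt_dec 0 (f' m) then add_query (BinarySearch n x0 m)
    else None
  end.

Fixpoint BinarySearchIII (fuel : nat) (xm xp : R) : option (R * nat) :=
  match fuel with
  | O => None
  | S n =>
    let m := (xm + xp) / 2 in
    if Rlt_dec (Rabs (f' m)) eps then Some (m, 1%nat)
    else if Rlt_dec 0 (f' m) then add_query (BinarySearch n xm m)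
    else if Rle_dec (f xm) (f m) then add_query (BinarySearchIII n xm m)
    else add_query (BinarySearchIII n m xp)
  end.

Fixpoint BinarySearchII (fuel : nat) (xm xp : R) : option (R * nat) :=
  match fuel with
  | O => None
  | S n =>
    let m := (xm + xp) / 2 in
    if Rlt_dec (Rabs (f' m)) eps then Some (m, 1%nat)
    else if Rlt_dec 0 (f' m) then add_query (BinarySearch n xm m)
    else if Rle_dec (f xm) (f m) then add_query (BinarySearchIII n xm m)
    else if Rle_dec (f m) (f xp) then add_query (BinarySearchIII n m xp)
    else if Rle_dec (f xm - f m) ((f xm - f xp) / 2)
         then add_query (BinarySearchII n xm m)
    else add_query (BinarySearchII n m xp)
  end.

End Algorithms.

(* Main.v *)
Require Import Defs.
From Stdlib Require Import Reals Lra Psatz ZArith.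
From Coquelicot Require Import Coquelicot.
Open Scope R_scope.

Lemma taylor_up f f' x y : one_smooth f f' -> x < y ->
  f y <= f x + f' x * (y - x) + (y - x)^2/2.
Proof.
  intros [Hd Hl] Hxy.
  pose (g := fun t => f t - (f' x * t + (t - x)^2/2)).
  assert (Hg : forall c, x <= c <= y -> derivable_pt_lim g c (f' c - (f' x + (c - x)))).
  { intros z _. unfold g. apply derivable_pt_lim_minus. apply Hd.
    apply is_derive_Reals. auto_derive; auto. lra. }
  destruct (MVT_cor2 g _ x y Hxy Hg) as [c [Hc Hcr]].
  unfold g in Hc.
  assert (Hlc := Hl c x).
  assert (f' c - f' x <= c - x).
  { assert (Rabs (c - x) = c - x) by (apply Rabs_right; lra).
    pose proof (Rle_abs (f' c - f' x)). lra. }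
  assert ((f' c - (f' x + (c - x))) * (y - x) <= 0).
  { apply Rmult_le_0_r; lra. }
  lra.
Qed.

Lemma pow2_gt n : INR n < 2 ^ n.
Proof.
  induction n. simpl; lra.
  rewrite S_INR. simpl. assert (1 <= 2 ^ n) by (apply pow_R1_Rle; lra). lra.
Qed.

Lemma ln2_gt : / 2 < ln 2.
Proof.
  assert (exp (/2) < 2).
  { assert (exp (/2) * exp (/2) = exp 1) by (rewrite <- exp_plus; f_equal; lra).
    pose proof exp_le_3. pose proof (exp_pos (/2)). nra. }
  rewrite <- (ln_exp (/2)). apply ln_increasing. apply exp_pos. auto.
Qed.

Lemma abs_split v e : ~ Rabs v < e -> v <= - e \/ e <= v.
Proof. intros H. unfold Rabs in H; destruct (Rcase_abs v); lra. Qed.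

Lemma bs_ok f f' eps n : 0 < eps -> one_smooth f f' -> forall x0 x1,
  x0 < x1 -> f' x0 <= - eps -> eps <= f' x1 -> x1 - x0 < 2 ^ n * (3 * eps / 2) ->
  exists (m : R) (q : nat), BinarySearch f' eps n x0 x1 = Some (m, S q) /\ Rabs (f' m) < eps /\
    2 ^ q * (3 * eps / 2) <= x1 - x0.
Proof.
  intros He Hs. induction n; intros x0 x1 Hx H0 H1 HL.
  all: assert (Hlow : 2 * eps <= x1 - x0) by
    (destruct Hs as [_ Hl]; pose proof (Hl x1 x0);
     rewrite (Rabs_right (x1 - x0)) in H by lra;
     pose proof (Rle_abs (f' x1 - f' x0)); lra).
  - simpl in HL. lra.
  - simpl. simpl in HL.
    destruct (Rlt_dec (Rabs (f' ((x0 + x1) / 2))) eps) as [Ha|Ha].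
    + exists ((x0 + x1) / 2), 0%nat. simpl. repeat split; auto; lra.
    + destruct (Rle_dec (f' ((x0 + x1) / 2)) (- eps)) as [Hb|Hb].
      * destruct (IHn ((x0 + x1) / 2) x1) as [m [q [E [E1 E2]]]]; try lra.
        rewrite E. exists m, (S q). simpl. repeat split; auto; lra.
      * destruct (Rlt_dec 0 (f' ((x0 + x1) / 2))) as [Hc|Hc].
        -- apply abs_split in Ha.
           destruct (IHn x0 ((x0 + x1) / 2)) as [m [q [E [E1 E2]]]]; try lra.
           rewrite E. exists m, (S q). simpl. repeat split; auto; lra.
        -- apply abs_split in Ha. lra.
Qed.

Lemma bs3_ok f f' eps n : 0 < eps -> one_smooth f f' -> forall x0 x1,
  x0 < x1 -> f' x0 <= - eps -> f x0 <= f x1 -> x1 - x0 < 2 ^ n * (3 * eps / 2) ->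
  exists (m : R) (q : nat), BinarySearchIII f f' eps n x0 x1 = Some (m, S q) /\ Rabs (f' m) < eps /\
    2 ^ q * (3 * eps / 2) <= x1 - x0.
Proof.
  intros He Hs. induction n; intros x0 x1 Hx H0 H1 HL.
  all: assert (Hlow : 2 * eps <= x1 - x0) by
    (pose proof (taylor_up f f' x0 x1 Hs Hx);
     assert (f' x0 * (x1 - x0) <= - eps * (x1 - x0)) by (apply Rmult_le_compat_r; lra);
     nra).
  - simpl in HL. lra.
  - simpl. simpl in HL.
    destruct (Rlt_dec (Rabs (f' ((x0 + x1) / 2))) eps) as [Ha|Ha].
    + exists ((x0 + x1) / 2), 0%nat. simpl. repeat split; auto; lra.
    + apply abs_split in Ha.
      destruct (Rlt_dec 0 (f' ((x0 + x1) / 2))) as [Hc|Hc].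
      * destruct (bs_ok f f' eps n He Hs x0 ((x0 + x1) / 2)) as [m [q [E [E1 E2]]]]; try lra.
        rewrite E. exists m, (S q). simpl. repeat split; auto; lra.
      * destruct (Rle_dec (f x0) (f ((x0 + x1) / 2))) as [Hb|Hb].
        -- destruct (IHn x0 ((x0 + x1) / 2)) as [m [q [E [E1 E2]]]]; try lra.
           rewrite E. exists m, (S q). simpl. repeat split; auto; lra.
        -- destruct (IHn ((x0 + x1) / 2) x1) as [m [q [E [E1 E2]]]]; try lra.
           rewrite E. exists m, (S q). simpl. repeat split; auto; lra.
Qed.

Lemma bs2_ok f f' eps n : 0 < eps -> one_smooth f f' -> forall x0 x1,
  x0 < x1 -> f' x0 <= - eps -> 0 <= f x0 - f x1 <= eps / 4 * (x1 - x0) ->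
  x1 - x0 < 2 ^ n * (3 * eps / 2) ->
  exists (m : R) (q : nat), BinarySearchII f f' eps n x0 x1 = Some (m, S q) /\ Rabs (f' m) < eps /\
    2 ^ q * (3 * eps / 2) <= x1 - x0.
Proof.
  intros He Hs. induction n; intros x0 x1 Hx H0 H1 HL.
  all: assert (Hlow : 3 * eps / 2 <= x1 - x0) by
    (pose proof (taylor_up f f' x0 x1 Hs Hx);
     assert (f' x0 * (x1 - x0) <= - eps * (x1 - x0)) by (apply Rmult_le_compat_r; lra);
     nra).
  - simpl in HL. lra.
  - simpl. simpl in HL.
    destruct (Rlt_dec (Rabs (f' ((x0 + x1) / 2))) eps) as [Ha|Ha].
    + exists ((x0 + x1) / 2), 0%nat. simpl. repeat split; auto; lra.
    + apply abs_split in Ha.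
      destruct (Rlt_dec 0 (f' ((x0 + x1) / 2))) as [Hc|Hc].
      * destruct (bs_ok f f' eps n He Hs x0 ((x0 + x1) / 2)) as [m [q [E [E1 E2]]]]; try lra.
        rewrite E. exists m, (S q). simpl. repeat split; auto; lra.
      * destruct (Rle_dec (f x0) (f ((x0 + x1) / 2))) as [Hb|Hb].
        -- destruct (bs3_ok f f' eps n He Hs x0 ((x0 + x1) / 2)) as [m [q [E [E1 E2]]]]; try lra.
           rewrite E. exists m, (S q). simpl. repeat split; auto; lra.
        -- destruct (Rle_dec (f ((x0 + x1) / 2)) (f x1)) as [Hd|Hd].
          ++ destruct (bs3_ok f f' eps n He Hs ((x0 + x1) / 2) x1) as [m [q [E [E1 E2]]]]; try lra.
             rewrite E. exists m, (S q). simpl. repeat split; auto; lra.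
          ++ destruct (Rle_dec (f x0 - f ((x0 + x1) / 2)) ((f x0 - f x1) / 2)) as [Hf|Hf].
            ** destruct (IHn x0 ((x0 + x1) / 2)) as [m [q [E [E1 E2]]]]; try lra.
               rewrite E. exists m, (S q). simpl. repeat split; auto; lra.
            ** destruct (IHn ((x0 + x1) / 2) x1) as [m [q [E [E1 E2]]]]; try lra.
               rewrite E. exists m, (S q). simpl. repeat split; auto; lra.
Qed.

Theorem lemmaA6 :
  exists C : R, 0 < C /\
  forall (eps : R) (f f' : R -> R) (xm xp : R),
    0 < eps ->
    one_smooth f f' ->
    xm < xp ->
    f' xm <= - eps ->
    0 <= f xm - f xp <= eps / 4 * (xp - xm) ->
    exists (fuel : nat) (m : R) (q : nat),
      BinarySearchII f f' eps fuel xm xp = Some (m, q) /\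
      Rabs (f' m) < eps /\
      INR q <= C * (1 + Rmax 0 (ln ((xp - xm) / eps))).
Proof.
  exists 2. split; [lra|].
  intros eps f f' xm xp He Hs Hx H0 H1.
  set (r := (xp - xm) / (3 * eps / 2)).
  assert (Hr : 0 < r) by (unfold r; apply Rdiv_lt_0_compat; lra).
  destruct (archimed r) as [Hu _].
  set (n := Z.to_nat (up r)).
  assert (Hn : r < INR n).
  { unfold n. rewrite INR_IZR_INZ, Z2Nat.id; auto.
    apply le_IZR. lra. }
  assert (HL : xp - xm < 2 ^ n * (3 * eps / 2)).
  { pose proof (pow2_gt n).
    assert (xp - xm = r * (3 * eps / 2)) by (unfold r; field; lra).
    rewrite H2. apply Rmult_lt_compat_r; lra. }
  destruct (bs2_ok f f' eps n He Hs xm xp Hx H0 H1 HL) as [m [q [E [E1 E2]]]].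
  exists n, m, (S q). repeat split; auto.
  assert (Hp : 0 < 2 ^ q) by (apply pow_lt; lra).
  assert (H2q : 2 ^ q <= (xp - xm) / eps).
  { apply Rmult_le_reg_r with eps; auto. unfold Rdiv. rewrite Rmult_assoc, Rinv_l by lra.
    nra. }
  assert (Hln : INR q * ln 2 <= ln ((xp - xm) / eps)).
  { rewrite <- ln_pow by lra. apply ln_le; auto. }
  pose proof ln2_gt. pose proof (pos_INR q).
  assert (INR q <= 2 * ln ((xp - xm) / eps)) by nra.
  pose proof (Rmax_r 0 (ln ((xp - xm) / eps))).
  rewrite S_INR. lra.
Qed.
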